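(* Let $F$ be a $4$-regular graph, let $D$ be a directed version of $F$, let $B$ be a strictly fundamental cycle basis of $F$, and let $\mathbf o$ be a transitional orientation of $F$. Then $\mathrm{CM}(F,B,D)\cdot\Delta_{D,\mathbf o}$ is totally transversally unimodular.
   Context: Graphs: $G=(V,H,E,\epsilon)$ with finite sets of vertices $V$ and half-edges $H$, a partition $E$ of $H$ into unordered pairs (edges), and $\epsilon:H\to V$; loops and multiple edges allowed. A directed version orders each edge as (tail, head). A single transition is an unordered pair of distinct half-edges incident with a common vertex; a directed single transition is such an ordered pair. A closed walk is a sequence $((h_1,h_2),\dots,(h_{n-1},h_n))$ of directed single transitions with $\{h_2,h_3\},\{h_4,h_5\},\dots,\{h_n,h_1\}$ edges, up to cyclic shift. $\sigma(D,W)\in\mathbb Z^{E}$ counts, at each edge, traversals by $W$ along its direction in $D$ minus traversals against it. An oriented circuit is a nonempty closed walk in which each half-edge occurs at most once; a circuit is one with orientation forgotten. For a maximal forest $T$ of $G$ and $e\notin T$, the fundamental circuit of $e$ is the unique circuit whose only edge outside $T$ is $e$; a strictly fundamental cycle basis w.r.t. $T$ is the set of these fundamental circuits, each with an arbitrary orientation. $\mathrm{CM}(G,\Gamma,D)$ is the $\Gamma\times E(G)$ matrix whose row indexed by $W\in\Gamma$ is $\sigma(D,W)$. $F$ is $4$-regular if every vertex is incident with exactly $4$ half-edges. A transition at $v$ is a partition of the four half-edges at $v$ into two single transitions; $\mathfrak T(F)$ is the set of all transitions, and a transversal of $\mathfrak T(F)$ is a set containing exactly one transition at each vertex. A transitional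 orientation $\mathbf o$ assigns to each transition $t$ one of its two single transitions $\mathbf o(t)$. $\Delta_{D,\mathbf o}$ is the $E(F)\times\mathfrak T(F)$ matrix over $\mathbb Q$ whose $(e,t)$ entry is $1$ if $e\cap\mathbf o(t)=\{h\}$ with $h$ the tail of $e$ in $D$, $-1$ if $e\cap\mathbf o(t)=\{h\}$ with $h$ the head, and $0$ otherwise. An $X\times\mathfrak T(F)$ matrix is totally transversally unimodular if for every transversal $T$ of $\mathfrak T(F)$, its submatrix of columns in $T$ is totally unimodular (every square submatrix has determinant in $\{-1,0,1\}$). *)

(* Defs.v *)
From mathcomp Require Import all_boot all_order all_algebra.
Set Implicit Arguments. Unset Strict Implicit. Unset Printing Implicit Defensive.
Import GRing.Theory Num.Theory.

Local Open Scope ring_scope.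

(* A graph G = (V, H, E, eps): finite types of vertices V and half-edges H,
   E : {set {set H}} a partition of H into unordered pairs (edges),
   eps : H -> V the incidence map. *)
Section Graphs.
Variables (V H : finType) (E : {set {set H}}) (eps : H -> V).

Definition is_graph : bool :=
  partition E [set: H] && [forall e in E, #|e| == 2].

Definition four_regular : Prop :=
  forall v : V, #|[set h | eps h == v]| = 4%N.

(* A directed version D is given by its set of tail half-edges [tl]:
   each edge contains exactly one tail; the other half-edge is the head. *)
Definition directed_version (tl : {set H}) : Prop :=
  forall e, e \in E -> #|e :&: tl| = 1%N.

Definition dsingle_transition (p : H * H) : bool :=
  (p.1 != p.2) && (eps p.1 == eps p.2).

Definition closed_walk (W : seq (H * H)) : bool :=
  all dsingle_transition W && cycle (fun p q => [set p.2; q.1] \in E) W.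

(* sigma(D,W)(e): traversals of e along D minus traversals against D.
   The traversal following transition p leaves through the half-edge p.2
   of the edge {p.2, q.1}; it is along D iff p.2 is the tail. *)
Definition sigma (tl : {set H}) (W : seq (H * H)) (e : {set H}) : int :=
  \sum_(p <- W) (if p.2 \in e then (if p.2 \in tl then 1 else -1) else 0).

Definition oriented_circuit (W : seq (H * H)) : bool :=
  (W != [::]) && closed_walk W && uniq (flatten [seq [:: p.1; p.2] | p <- W]).

Definition uses (W : seq (H * H)) (e : {set H}) : bool :=
  has (fun p => p.2 \in e) W.

Definition forest (T : {set {set H}}) : Prop :=
  T \subset E /\
  forall W, oriented_circuit W -> exists2 e, e \in E & uses W e && (e \notin T).

Definition maximal_forest (T : {set {set H}}) : Prop :=
  forest T /\ forall T', forest T' -> T \subset T' -> T' = T.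

(* B e is the fundamental circuit of the edge e \notin T (with an arbitrary
   orientation and starting point): an oriented circuit traversing e whose
   only edge outside T is e. *)
Definition strictly_fundamental_basis (T : {set {set H}})
    (B : {set H} -> seq (H * H)) : Prop :=
  forall e, e \in E :\: T ->
    [/\ oriented_circuit (B e), uses (B e) e &
        forall e', e' \in E -> uses (B e) e' -> (e' \in T) || (e' == e)].

(* CM(F,B,D): row indexed by (the fundamental circuit B e0 of) e0,
   column indexed by the edge e. *)
Definition CM (tl : {set H}) (B : {set H} -> seq (H * H)) (e0 e : {set H}) : int :=
  sigma tl (B e0) e.

Definition transition_at (v : V) (t : {set {set H}}) : bool :=
  partition t [set h | eps h == v] && [forall s in t, #|s| == 2].

Definition transitions : {set {set {set H}}} :=
  [set t | [exists v, transition_at v t]].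

Definition transitional_orientation (o : {set {set H}} -> {set H}) : Prop :=
  forall t, t \in transitions -> o t \in t.

Definition Delta (tl : {set H}) (o : {set {set H}} -> {set H})
    (e : {set H}) (t : {set {set H}}) : rat :=
  match [pick h | e :&: o t == [set h]] with
  | Some h => if h \in tl then 1 else -1
  | None => 0
  end.

Definition transversal (Tr : {set {set {set H}}}) : Prop :=
  Tr \subset transitions /\
  forall v : V, #|[set t in Tr | transition_at v t]| = 1%N.

Definition totally_unimodular (X Y : finType) (R : {set X}) (C : {set Y})
    (M : X -> Y -> rat) : Prop :=
  forall (k : nat) (f : 'I_k -> X) (g : 'I_k -> Y),
    injective f -> injective g ->
    (forall i, f i \in R) -> (forall j, g j \in C) ->
    \det (\matrix_(i, j) M (f i) (g j)) \in [:: 0; 1; -1].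

Definition totally_transversally_unimodular (X : finType) (R : {set X})
    (M : X -> {set {set H}} -> rat) : Prop :=
  forall Tr, transversal Tr -> totally_unimodular R Tr M.

Definition CM_Delta (tl : {set H}) (B : {set H} -> seq (H * H))
    (o : {set {set H}} -> {set H}) (e0 : {set H}) (t : {set {set H}}) : rat :=
  \sum_(e in E) ((CM tl B e0 e)%:~R * Delta tl o e t).

End Graphs.

(* Main.v *)
Require Import Defs.
From mathcomp Require Import all_boot all_order all_algebra.
From mathcomp Require Import zify.
Set Implicit Arguments. Unset Strict Implicit. Unset Printing Implicit Defensive.
Import Order.TTheory GRing.Theory Num.Theory.
Local Open Scope ring_scope.

Lemma full_rowsub (n c : nat) (A : 'M[rat]_(n, c)) :
  (forall z : 'cV_c, A *m z = 0 -> z = 0) ->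
  exists r : 'I_c -> 'I_n, injective r /\ \det (rowsub r A) != 0.
Proof.
move=> Hinj.
have Hr : \rank A = c.
  apply/eqP; rewrite eqn_leq rank_leq_col /=.
  have := mxrank_ker A^T; rewrite mxrank_tr.
  case: (leqP c (\rank A)) => // Hlt Hk.
  have : kermx A^T != 0.
    by rewrite -mxrank_eq0 Hk subn_eq0 -ltnNge.
  have HK : kermx A^T *m A^T = 0 by rewrite mulmx_ker.
  move: (kermx A^T) HK => K HK.
  case/matrix0Pn=> i [j Hij].
  have Hv : row i K *m A^T = 0 by rewrite -row_mul HK row0.
  have := Hinj (row i K)^T.
  rewrite -[A in A *m _]trmxK -trmx_mul Hv trmx0 => /(_ erefl) /matrixP /(_ j 0).
  rewrite !mxE => H.
  by rewrite H eqxx in Hij.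
have Hf := maxrowsub_free A.
have Hi := @maxrankfun_inj _ _ _ A.
move: (maxrankfun A) Hf Hi; rewrite Hr => r Hf Hi.
exists r; split => //.
by rewrite -unitfE -unitmxE -row_free_unit.
Qed.
Definition pm1 (x : rat) : bool := (x == 0) || (x == 1) || (x == -1).

Lemma pm1M x y : pm1 x -> pm1 y -> pm1 (x * y).
Proof.
rewrite /pm1 => /orP[/orP[]|] /eqP-> /orP[/orP[]|] /eqP->;
by rewrite ?mulr0 ?mul0r ?mulr1 ?mul1r ?mulrNN ?mulr1 ?mulN1r ?opprK ?eqxx ?orbT.
Qed.

Lemma pm1N x : pm1 x -> pm1 (- x).
Proof.
by rewrite /pm1 => /orP[/orP[]|] /eqP->; rewrite ?oppr0 ?opprK ?eqxx ?orbT.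
Qed.

Definition inc_col n m (Q : 'M[rat]_(n, m)) :=
  forall j, (forall i, pm1 (Q i j)) /\
            (forall i i', Q i j = 1 -> Q i' j = 1 -> i = i') /\
            (forall i i', Q i j = -1 -> Q i' j = -1 -> i = i').

Lemma inc_col_minor n (Q : 'M[rat]_n.+1) i0 j0 :
  inc_col Q -> inc_col (row' i0 (col' j0 Q)).
Proof.
move=> HQ j; have [H1 [H2 H3]] := HQ (lift j0 j); split; [|split].
- by move=> i; rewrite !mxE.
- by move=> i i'; rewrite !mxE => /H2 h /h /lift_inj.
- by move=> i i'; rewrite !mxE => /H3 h /h /lift_inj.
Qed.

Lemma inc_det n (Q : 'M[rat]_n) : inc_col Q -> pm1 (\det Q).
Proof.
elim: n Q => [|n IH] Q HQ; first by rewrite det_mx00 /pm1 eqxx orbT.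
case: (pickP (fun j => [forall i, forall i', (Q i j != 0) && (Q i' j != 0) ==> (i == i')])) => [j Hj|Hno].
- rewrite (expand_det_col Q j).
  case: (pickP (fun i => Q i j != 0)) => [i0 Hi0|Hz].
  + rewrite (bigD1 i0) //= big1 ?addr0.
      apply: pm1M; first by have [] := HQ j.
      rewrite /cofactor; apply: pm1M.
        by rewrite -signr_odd /pm1; case: odd; rewrite ?expr1 ?expr0 ?eqxx ?orbT.
      exact/IH/inc_col_minor.
    move=> i Hi; case: (eqVneq (Q i j) 0) => [->|Hn]; first by rewrite mul0r.
    move/forallP: Hj => /(_ i) /forallP /(_ i0); rewrite Hn Hi0 /= => /eqP Hii.
    by rewrite Hii eqxx in Hi.
  + by rewrite big1 ?/pm1 ?eqxx // => i _; move/negbFE/eqP: (Hz i) => ->; rewrite mul0r.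
- suff: \det Q == 0 by rewrite /pm1 => ->.
  apply/det0P; exists (const_mx 1).
    apply/negP => /eqP/matrixP/(_ 0 0); rewrite !mxE => /eqP; by rewrite oner_eq0.
  apply/matrixP => z j; rewrite !mxE.
  under eq_bigr do rewrite mxE mul1r.
  move: (Hno j) => /negbT; rewrite negb_forall => /existsP[i].
  rewrite negb_forall => /existsP[i'] ; rewrite negb_imply => /andP[/andP[Hi Hi'] Hne].
  have [H1 [H2 H3]] := HQ j.
  have Hoth : forall l, l != i -> l != i' -> Q l j = 0.
    move=> l Hl Hl'; move: (H1 l); rewrite /pm1 => /orP[/orP[]|] /eqP // Hq.
      move: (H1 i); rewrite /pm1 (negbTE Hi) /= => /orP[] /eqP Hq';
        [by rewrite (H2 _ _ Hq Hq') eqxx in Hl|].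
      move: (H1 i'); rewrite /pm1 (negbTE Hi') /= => /orP[] /eqP Hq'';
        [by rewrite (H2 _ _ Hq Hq'') eqxx in Hl'| by rewrite (H3 _ _ Hq' Hq'') eqxx in Hne].
    move: (H1 i); rewrite /pm1 (negbTE Hi) /= => /orP[] /eqP Hq'; 
      [|by rewrite (H3 _ _ Hq Hq') eqxx in Hl].
    move: (H1 i'); rewrite /pm1 (negbTE Hi') /= => /orP[] /eqP Hq'';
      [by rewrite (H2 _ _ Hq' Hq'') eqxx in Hne| by rewrite (H3 _ _ Hq Hq'') eqxx in Hl'].
  rewrite (bigD1 i) //= (bigD1 i') 1?eq_sym //= big1 ?addr0; last first.
    by move=> l /andP[Hl Hl']; apply: Hoth.
  move: (H1 i); rewrite /pm1 (negbTE Hi) /= => /orP[] /eqP Hq'.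
    move: (H1 i'); rewrite /pm1 (negbTE Hi') /= => /orP[] /eqP Hq''.
      by rewrite (H2 _ _ Hq' Hq'') eqxx in Hne.
    by rewrite Hq' Hq'' subrr.
  move: (H1 i'); rewrite /pm1 (negbTE Hi') /= => /orP[] /eqP Hq''.
    by rewrite Hq' Hq'' addrC subrr.
  by rewrite (H3 _ _ Hq' Hq'') eqxx in Hne.
Qed.

Lemma sum_reindex (I J : finType) (phi : I -> J) (F : J -> rat) :
  injective phi -> (forall e, F e != 0 -> exists b, phi b = e) ->
  \sum_e F e = \sum_b F (phi b).
Proof.
move=> Hi Hs.
rewrite -(big_imset F (h:=phi) (A:=predT)); last by move=> x y _ _; apply: Hi.
rewrite [RHS]big_mkcond /=; apply: eq_bigr => e _.
case: ifP => // He.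
case: (eqVneq (F e) 0) => // /Hs [b Hb].
by move: He; rewrite -Hb imset_f.
Qed.

Section Net.
Variables (P Ed : finType) (A : P -> Ed -> rat) (good : pred Ed).
Hypothesis Hgood : forall e, good e ->
  (forall p, pm1 (A p e)) /\ (forall p p', A p e = 1 -> A p' e = 1 -> p = p') /\
  (forall p p', A p e = -1 -> A p' e = -1 -> p = p').

Lemma inc_sub n (r : 'I_n -> P) (c : 'I_n -> Ed) :
  injective r -> (forall b, good (c b)) ->
  inc_col (\matrix_(a, b) A (r a) (c b)).
Proof.
move=> Hr Hc j; have [H1 [H2 H3]] := Hgood (Hc j); split; [|split].
- by move=> i; rewrite mxE.
- by move=> i i'; rewrite !mxE => /H2 h /h /Hr.
- by move=> i i'; rewrite !mxE => /H3 h /h /Hr.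
Qed.

Lemma network_det (k m : nat) (phi : 'I_(k + m) -> Ed) (n : 'I_k -> Ed)
  (w : 'I_k -> Ed -> rat) (s : 'I_k -> rat) :
  injective phi -> (forall b, good (phi b)) -> (forall j, good (n j)) ->
  (forall j b, phi b != n j) ->
  (forall j p, \sum_e A p e * w j e = 0) ->
  (forall j e, w j e != 0 -> e = n j \/ exists b, phi b = e) ->
  (forall j, w j (n j) = s j) -> (forall j, s j * s j = 1) ->
  (forall z : Ed -> rat, (forall e, z e != 0 -> exists b, phi b = e) ->
     (forall p, \sum_e A p e * z e = 0) -> forall b, z (phi b) = 0) ->
  pm1 (\det (\matrix_(i, b) w i (phi (lshift m b)))).
Proof.
move=> Hphi Hgphi Hgn Hdis Hcons Hsupp Hs Hs2 Hinj.
pose Acol : 'M[rat]_(#|P|, k + m) := \matrix_(p, b) A (enum_val p) (phi b).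
have [r [Hr Hdet]] : exists r : 'I_(k + m) -> 'I_#|P|, injective r /\ \det (rowsub r Acol) != 0.
  apply: full_rowsub => z Hz.
  pose ze e := \sum_(b | phi b == e) z b 0.
  have Hze : forall b, ze (phi b) = z b 0.
    move=> b; rewrite /ze (big_pred1 b) // => b'; apply/eqP/eqP => [/Hphi|->] //.
  have := Hinj ze.
  have Hsz : forall e, ze e != 0 -> exists b, phi b = e.
    move=> e; case: (pickP (fun b => phi b == e)) => [b /eqP Hb|Hn]; first by exists b.
    by rewrite /ze big_pred0 ?eqxx.
  move=> /(_ Hsz) H; apply/matrixP => b j; rewrite (ord1 j) mxE -Hze H //.
  move=> p; rewrite (sum_reindex (phi := phi)) //; last first.
    by move=> e He; apply: Hsz; apply: contraNneq He => ->; rewrite mulr0.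
  move/matrixP: Hz => /(_ (enum_rank p) 0); rewrite !mxE => HH; apply: (etrans _ HH).
  by apply: eq_bigr => b0 _; rewrite Hze mxE enum_rankK.
pose A0 := rowsub r Acol.
have HA0 : pm1 (\det A0).
  apply: inc_det.
  have -> : A0 = \matrix_(a, b) A (enum_val (r a)) (phi b).
    by apply/matrixP => a b; rewrite !mxE.
  by apply: inc_sub => // a a' /enum_val_inj /Hr.
pose psi (b : 'I_(k + m)) := match split b with inl j => n j | inr l => phi (rshift k l) end.
pose M' := \matrix_(a, b) A (enum_val (r a)) (psi b).
have HM' : pm1 (\det M').
  apply/inc_det/inc_sub; first by move=> a a' /enum_val_inj /Hr.
  by move=> b; rewrite /psi; case: split.
pose Y11 : 'M_k := \matrix_(b, j) (- s j * w j (phi (lshift m b))).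
pose Y21 : 'M_(m, k) := \matrix_(l, j) (- s j * w j (phi (rshift k l))).
pose Y := block_mx Y11 0 Y21 (1%:M : 'M_m).
have HMY : M' = A0 *m Y.
  apply/matrixP => a b; rewrite -(splitK b); case: (split b) => [j|l].
  - rewrite !mxE /psi unsplitK /= big_split_ord /=.
    rewrite /Y /Y11 /Y21.
    under eq_bigr do rewrite block_mxEul !mxE.
    under [X in _ + X]eq_bigr do rewrite block_mxEdl !mxE.
    rewrite -(big_split_ord _ xpredT (fun b => A (enum_val (r a)) (phi b) * (- s j * w j (phi b)))) /=.
    have := Hcons j (enum_val (r a)).
    rewrite (bigD1 (n j)) //= Hs => /eqP; rewrite addr_eq0 => /eqP HH.
    move: HH; rewrite big_mkcond (sum_reindex (phi := phi) Hphi) /=; last first.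
      move=> e; case: ifP => [Hne|]; last by rewrite eqxx.
      rewrite mulf_eq0 negb_or => /andP[_ He].
      by case: (Hsupp j e He) => // Heq; rewrite Heq eqxx in Hne.
    rewrite (eq_bigr (fun b => A (enum_val (r a)) (phi b) * w j (phi b))); last first.
      by move=> b0 _; rewrite Hdis.
    move=> HH; under eq_bigr do rewrite mulrCA.
    by rewrite -mulr_sumr -[X in _ * X]opprK -HH mulrN mulNr opprK mulrCA Hs2 mulr1.
  - rewrite !mxE /psi unsplitK /= big_split_ord /= /Y.
    rewrite big1 ?add0r; last first.
  move=> i _; by rewrite block_mxEur [X in _ * X]mxE mulr0.
    rewrite (bigD1 l) //= big1 ?addr0; last first.
      by move=> i Hi; rewrite block_mxEdr [X in _ * X]mxE (negbTE Hi) mulr0.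
    by rewrite block_mxEdr [X in _ * X]mxE eqxx mulr1 !mxE.
have HdA0 : \det A0 * \det A0 = 1.
  move: HA0 Hdet; rewrite /pm1 /A0 => /orP[/orP[]|] /eqP -> //; 
    by rewrite ?mulr1 ?mulrNN ?mulr1.
have HY : \det M' = \det A0 * \det Y11.
  by rewrite HMY det_mulmx /Y det_lblock det1 mulr1.
have HY11 : pm1 (\det Y11).
  have -> : \det Y11 = \det A0 * \det M' by rewrite HY mulrA HdA0 mul1r.
  by apply: pm1M.
pose d := \row_j (- s j).
have HYd : Y11 = (\matrix_(i, b) w i (phi (lshift m b)))^T *m diag_mx d.
  by apply/matrixP => b j; rewrite mul_mx_diag !mxE mulrC.
have Hpd : pm1 (\prod_j d 0 j).
  apply: (big_ind pm1) => //; first exact: pm1M.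
  move=> j _; rewrite mxE; apply: pm1N.
  have := Hs2 j; rewrite -expr2 => /eqP; rewrite sqrf_eq1 /pm1 => /orP[] /eqP ->;
    by rewrite ?eqxx ?orbT.
have Hpd2 : (\prod_j d 0 j) * (\prod_j d 0 j) = 1.
  rewrite -big_split /=; apply: big1 => j _; by rewrite mxE mulrNN Hs2.
move: HY11; rewrite HYd det_mulmx det_tr det_diag => HH.
have -> : \det (\matrix_(i, b) w i (phi (lshift m b))) =
  (\det (\matrix_(i, b) w i (phi (lshift m b))) * \prod_j d 0 j) * \prod_j d 0 j.
  by rewrite -mulrA Hpd2 mulr1.
exact: pm1M.
Qed.
End Net.

Section G.
Variables (V H : finType) (E : {set {set H}}) (eps : H -> V) (tl : {set H}).
Hypothesis HG : is_graph E.
Hypothesis Htl : directed_version E tl.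

Definition blk (h : H) := pblock E h.
Definition sgn (h : H) : rat := if h \in tl then 1 else -1.
Definition partner (h : H) := odflt h [pick g | (g \in blk h) && (g != h)].

Lemma HGpart : partition E [set: H].
Proof. by case/andP: HG. Qed.

Lemma HGtriv : trivIset E.
Proof. by case/and3P: HGpart. Qed.

Lemma HG2 e : e \in E -> #|e| = 2%N.
Proof. by case/andP: HG => _ /forallP /(_ e) /implyP Hi /Hi /eqP. Qed.

Lemma blk_mem h : blk h \in E.
Proof. by apply: pblock_mem; case/and3P: HGpart => /eqP -> _ _; rewrite inE. Qed.

Lemma blk_in h : h \in blk h.
Proof. by rewrite mem_pblock; case/and3P: HGpart => /eqP -> _ _; rewrite inE. Qed.

Lemma blk_eq e h : e \in E -> h \in e -> blk h = e.
Proof. by move=> He Hh; apply: def_pblock => //; exact: HGtriv. Qed.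

Lemma edge2 e : e \in E -> exists h h', [/\ e = [set h; h'], h != h' & h \in tl] /\ h' \notin tl.
Proof.
move=> He; have := HG2 He; move/eqP/cards2P => [h [h' [Hne Heq]]]; subst e.
have := Htl He; move/eqP/cards1P => [x Hx].
have : x \in [set h; h'] :&: tl by rewrite Hx set11.
rewrite !inE => /andP[/orP[] /eqP Hxe Hxt]; subst x.
- exists h, h'; split => //; apply/negP => Ht'.
  have : h' \in [set h; h'] :&: tl by rewrite !inE eqxx orbT Ht'.
  by rewrite Hx inE eq_sym (negbTE Hne).
- exists h', h; rewrite setUC eq_sym; split => //; apply/negP => Ht'.
  have : h \in [set h; h'] :&: tl by rewrite !inE eqxx Ht'.
  by rewrite Hx inE (negbTE Hne).
Qed.

Lemma partner_spec h : [/\ blk h = [set h; partner h], partner h != h & sgn (partner h) = - sgn h].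
Proof.
have [g [g' [[He Hne Hg] Hg']]] := edge2 (blk_mem h).
have Hh := blk_in h; rewrite He !inE in Hh.
rewrite /partner; case: pickP => [x /andP[Hx Hxh]|Hn] /=.
- rewrite He !inE in Hx.
  case/orP: Hh => /eqP ?; subst h; case/orP: Hx => /eqP ?; subst x;
    rewrite ?eqxx in Hxh => //; split => //; rewrite /sgn ?Hg ?(negbTE Hg') ?opprK //.
  by rewrite setUC.
- case/orP: Hh => /eqP ?; subst h.
  + by have := Hn g'; rewrite He !inE eqxx orbT eq_sym Hne.
  + by have := Hn g; rewrite He !inE eqxx Hne.
Qed.

Lemma blk_partner h : blk h = [set h; partner h].
Proof. by case: (partner_spec h). Qed.

Lemma partner_neq h : partner h != h.
Proof. by case: (partner_spec h). Qed.

Lemma sgn_partner h : sgn (partner h) = - sgn h.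
Proof. by case: (partner_spec h). Qed.

Lemma blk_partner2 h : blk (partner h) = blk h.
Proof. by apply: blk_eq; rewrite ?blk_mem // blk_partner !inE eqxx orbT. Qed.

Lemma partnerK h : partner (partner h) = h.
Proof.
have H1 := blk_partner (partner h).
rewrite blk_partner2 blk_partner in H1.
have : h \in [set partner h; partner (partner h)] by rewrite -H1 !inE eqxx.
rewrite !inE => /orP[] /eqP Hh //.
by have := partner_neq h; rewrite -Hh eqxx.
Qed.

Lemma in_blk h x : (x \in blk h) = (x == h) || (x == partner h).
Proof. by rewrite blk_partner !inE. Qed.


Lemma sgn_sum e : e \in E -> \sum_(h in e) sgn h = 0.
Proof.
move=> He; have [h [h' [[-> Hne Ht] Ht']]] := edge2 He.
by rewrite big_setU1 ?inE //= big_set1 /sgn Ht (negbTE Ht') subrr.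
Qed.

Lemma sgn_neq0 h : sgn h != 0.
Proof. by rewrite /sgn; case: ifP; rewrite ?oppr_eq0 oner_eq0. Qed.

Lemma sgn2 h : sgn h * sgn h = 1.
Proof. by rewrite /sgn; case: ifP; rewrite ?mulrNN mulr1. Qed.

Lemma sum_part (S : pred H) (F : H -> {set H} -> rat) :
  \sum_(e in E) \sum_(h in e | S h) F h e = \sum_(h | S h) F h (blk h).
Proof.
rewrite (exchange_big_dep S) /=; last by move=> e h _ /andP[].
apply: eq_bigr => h Sh.
rewrite (big_pred1 (blk h)) // => e; rewrite Sh andbT; apply/andP/eqP => [[He Hh]|->].
- by rewrite (blk_eq He Hh).
- by rewrite blk_mem blk_in.
Qed.


Definition Rw (p q : H * H) := [set p.2; q.1] \in E.

Lemma consec p q h : Rw p q -> (q.1 == h) = (p.2 == partner h).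
Proof.
rewrite /Rw => He.
have Hne : p.2 != q.1.
  apply/eqP => Heq; move: (HG2 He); rewrite Heq setUid cards1.
  by [].
apply/eqP/eqP => [Hq|Hp].
- have Hb : blk h = [set p.2; q.1] by apply: blk_eq; rewrite // !inE Hq eqxx orbT.
  have : p.2 \in blk h by rewrite Hb !inE eqxx.
  rewrite in_blk => /orP[] /eqP // Hph.
  by move: Hne; rewrite Hph Hq eqxx.
- have Hb : blk h = [set p.2; q.1].
    by rewrite -blk_partner2; apply: blk_eq; rewrite // !inE Hp eqxx.
  have : q.1 \in blk h by rewrite Hb !inE eqxx orbT.
  rewrite in_blk => /orP[] /eqP // Hqh.
  by move: Hne; rewrite Hp Hqh eqxx.
Qed.

Lemma path_sum (a b : H * H -> rat) x s :
  path Rw x s -> (forall p q, Rw p q -> a q = b p) ->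
  \sum_(q <- s) a q = \sum_(q <- belast x s) b q.
Proof.
elim: s x => [|y s IH] x /=; first by rewrite !big_nil.
move=> /andP[Hxy Hp] Hab.
by rewrite !big_cons (IH y Hp Hab) (Hab _ _ Hxy).
Qed.

Section Walk.
Variable W : seq (H * H).
Hypothesis HW : closed_walk E eps W.

Definition outQ h : rat := \sum_(q <- W) (q.2 == h)%:R.
Definition inQ h : rat := \sum_(q <- W) (q.1 == h)%:R.

Lemma in_out h : inQ h = outQ (partner h).
Proof.
rewrite /inQ /outQ; case: W HW => [|x s] /andP[_ Hc]; first by rewrite !big_nil.
have Hab : forall p q, Rw p q -> ((q.1 == h)%:R : rat) = (p.2 == partner h)%:R.
  by move=> p q Hpq; rewrite (consec h Hpq).
have := path_sum Hc Hab.
rewrite belast_rcons big_rcons /= => <-; by rewrite big_cons addrC.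
Qed.

Definition Phi (S : pred H) : rat := \sum_(q <- W) ((S q.2)%:R - (S q.1)%:R).

Lemma sum_ind (S : pred H) x : \sum_(h | S h) ((x == h)%:R : rat) = (S x)%:R.
Proof.
rewrite big_mkcond (bigD1 x) //= big1 ?addr0; last first.
  by move=> h Hh; rewrite eq_sym (negbTE Hh); case: ifP.
by rewrite eqxx; case: (S x).
Qed.

Lemma sum_outin (S : pred H) : \sum_(h | S h) (outQ h - inQ h) = Phi S.
Proof.
rewrite /outQ /inQ /Phi.
under eq_bigr do rewrite -sumrB.
rewrite exchange_big /=; apply: eq_bigr => q _.
by rewrite sumrB !sum_ind.
Qed.

Lemma sigmaQ e : ((sigma tl W e)%:~R : rat) = \sum_(q <- W) (if q.2 \in e then sgn q.2 else 0).
Proof.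
rewrite /sigma rmorph_sum /=; apply: eq_bigr => q _.
by rewrite /sgn; case: (q.2 \in e); case: (q.2 \in tl); rewrite ?rmorphN ?rmorph1 ?rmorph0.
Qed.

Lemma sgn_sigma h : sgn h * (sigma tl W (blk h))%:~R = outQ h - inQ h.
Proof.
rewrite sigmaQ in_out /outQ mulr_sumr -sumrB; apply: eq_bigr => q _.
rewrite in_blk; case: (eqVneq q.2 h) => [->|Hh] /=.
  by rewrite sgn2 eq_sym (negbTE (partner_neq h)) subr0.
case: (eqVneq q.2 (partner h)) => [->|Hp] /=.
  by rewrite sgn_partner mulrN sgn2 sub0r.
by rewrite mulr0 subrr.
Qed.

Lemma GL (S : pred H) :
  \sum_(e in E) (\sum_(h in e | S h) sgn h) * (sigma tl W e)%:~R = Phi S.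
Proof.
under eq_bigr do rewrite mulr_suml.
rewrite (sum_part S (fun h e => sgn h * (sigma tl W e)%:~R)).
under eq_bigr do rewrite sgn_sigma.
exact: sum_outin.
Qed.

Lemma Phi_at v : Phi (fun h => eps h == v) = 0.
Proof.
rewrite /Phi big_seq big1 // => q Hq.
case/andP: HW => /allP /(_ q Hq) /andP[_ /eqP ->] _.
by rewrite subrr.
Qed.

Lemma Phi_ext (S S' : pred H) : (forall q, q \in W -> S q.1 = S' q.1 /\ S q.2 = S' q.2) -> Phi S = Phi S'.
Proof.
by move=> HS; rewrite /Phi !big_seq; apply: eq_bigr => q Hq; case: (HS q Hq) => -> ->.
Qed.

Lemma PhiB (S S' : pred H) : Phi (fun h => S h && ~~ S' h) = Phi S - Phi (fun h => S h && S' h).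
Proof.
rewrite /Phi -sumrB; apply: eq_bigr => q _.
by case: (S q.1); case: (S q.2); case: (S' q.1); case: (S' q.2);
  rewrite /= ?subr0 ?sub0r ?opprK ?subrr ?opprB ?addrA ?addr0 //.
Qed.

End Walk.

Lemma Delta_sum (o : {set {set H}} -> {set H}) e t : e \in E ->
  Delta tl o e t = \sum_(h in e | h \in o t) sgn h.
Proof.
move=> He; rewrite /Delta; case: pickP => [h /eqP Hh|Hn].
- rewrite (eq_bigl (fun x => x \in [set h])); last by move=> x; rewrite -Hh inE.
  by rewrite big_set1.
- have Hle : (#|e :&: o t| <= 2)%N by rewrite -(HG2 He) subset_leq_card // subsetIl.
  move: Hle; rewrite leq_eqVlt ltnS leq_eqVlt ltnS leqn0 => /orP[Hc|/orP[Hc|Hc]].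
  + have Heq : e :&: o t = e.
      by apply/eqP; rewrite eqEcard subsetIl (eqP Hc) (HG2 He).
    rewrite (eq_bigl (fun x => x \in e)); first by rewrite sgn_sum.
    by move=> x; rewrite -{2}Heq inE.
  + by case/cards1P: Hc => x Hx; have := Hn x; rewrite Hx eqxx.
  + rewrite big1 // => x Hx; move: Hc; rewrite cards_eq0 => /eqP Hc.
    have : x \in e :&: o t by rewrite inE.
    by rewrite Hc inE.
Qed.


Lemma sum_count (W : seq (H * H)) (P : pred (H * H)) :
  \sum_(q <- W) ((P q)%:R : rat) = (count P W)%:R.
Proof.
elim: W => [|q W IH]; first by rewrite big_nil.
by rewrite big_cons IH /= natrD.
Qed.

Lemma count_flat (W : seq (H * H)) h :
  count_mem h (flatten [seq [:: q.1; q.2] | q <- W]) =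
  (count (fun q => q.1 == h) W + count (fun q => q.2 == h) W)%N.
Proof.
elim: W => [|q W IH] //=; rewrite IH.
by rewrite !addnA; congr (_ + _)%N; rewrite addnAC.
Qed.

Lemma sigma_circ W e0 : oriented_circuit E eps W -> e0 \in E -> uses W e0 ->
  ((sigma tl W e0)%:~R : rat) * (sigma tl W e0)%:~R = 1.
Proof.
case/andP => /andP[_ HW] Hu He /hasP [q Hq Hqe].
have Hb : blk q.2 = e0 by apply: blk_eq.
have := sgn_sigma HW q.2; rewrite Hb /outQ /inQ !sum_count.
have := count_flat W q.2; rewrite count_uniq_mem //.
have Hout : (0 < count (fun q0 : H * H => q0.2 == q.2) W)%N.
  by rewrite -has_count; apply/hasP; exists q.
have Hmem : q.2 \in flatten [seq [:: q0.1; q0.2] | q0 <- W].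
  by apply/flattenP; exists [:: q.1; q.2]; [apply: (map_f _ Hq)|rewrite !inE eqxx orbT].
rewrite Hmem /= => Hs.
have Hin : count (fun q0 : H * H => q0.1 == q.2) W = 0%N.
  by move: (Hs) Hout; case: (count _ W) => [|a] //; rewrite addSn => -[] /eqP; rewrite eq_sym addn_eq0 => /andP[_ /eqP ->].
have Hout1 : count (fun q0 : H * H => q0.2 == q.2) W = 1%N by move: Hs; rewrite Hin.
rewrite Hin Hout1 subr0 => Hsg.
have -> : ((sigma tl W e0)%:~R : rat) = sgn q.2.
  by apply: (mulfI (sgn_neq0 q.2)); rewrite Hsg sgn2.
exact: sgn2.
Qed.

Lemma sigma_nouse W e : ~~ uses W e -> sigma tl W e = 0.
Proof.
move=> Hu; rewrite /sigma big_seq big1 // => q Hq.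
case: ifP => // Hqe; case/negP: Hu; apply/hasP; by exists q.
Qed.

Lemma uniq_flat2 (c : seq H) (a b : H -> H) :
  uniq (map a c) -> uniq (map b c) -> (forall x y, x \in c -> y \in c -> a x != b y) ->
  uniq (flatten [seq [:: a x; b x] | x <- c]).
Proof.
elim: c => [|x c IH] //= /andP[Hax Ha] /andP[Hbx Hb] Hab.
have Hmem : forall u, u \in flatten [seq [:: a x0; b x0] | x0 <- c] ->
    exists2 y, y \in c & (u == a y) || (u == b y).
  move=> u /flattenP [l /mapP [y Hy ->]]; rewrite !inE => Hu; by exists y.
rewrite IH //; last by move=> x0 y0 Hx Hy; apply: Hab; rewrite inE ?Hx ?Hy orbT.
rewrite andbT !inE negb_or Hab ?inE ?eqxx //=; apply/andP; split.
- apply/negP => /Hmem [y Hy /orP[] /eqP Hxy].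
    by move: Hax; rewrite Hxy (map_f a Hy).
  have Hy' : y \in x :: c by rewrite inE Hy orbT.
  by move: (Hab x y (mem_head _ _) Hy'); rewrite Hxy eqxx.
- apply/negP => /Hmem [y Hy /orP[] /eqP Hxy].
    have Hy' : y \in x :: c by rewrite inE Hy orbT.
    by move: (Hab y x Hy' (mem_head _ _)); rewrite -Hxy eqxx.
  by move: Hbx; rewrite Hxy (map_f b Hy).
Qed.


Lemma map_traj (T : Type) (f : T -> T) x n : map f (traject f x n) = traject f (f x) n.
Proof. by elim: n x => [|n IH] x //=; rewrite IH. Qed.

Section Forest.
Variables (T : {set {set H}}) (z : {set H} -> rat).
Hypothesis HT : forest E eps T.
Hypothesis Hz : forall e, z e != 0 -> e \in T.
Hypothesis Hc : forall v, \sum_(h | eps h == v) sgn h * z (blk h) = 0.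

Definition ff h := sgn h * z (blk h).
Definition fpos h := 0 < ff h.

Lemma ff_partner h : ff (partner h) = - ff h.
Proof. by rewrite /ff blk_partner2 sgn_partner mulNr. Qed.

Lemma ex_next h : fpos h -> exists g, (eps g == eps (partner h)) && fpos g.
Proof.
move=> Hp; apply/existsP; apply: contraT; rewrite negb_exists => /forallP Hn.
have := Hc (eps (partner h)).
rewrite (bigD1 (partner h)) //= => Heq.
suff : sgn (partner h) * z (blk (partner h)) + \sum_(g | (eps g == eps (partner h)) && (g != partner h)) sgn g * z (blk g) < 0.
  by rewrite Heq ltxx.
rewrite -(addr0 0) ltr_leD //; first by rewrite -/(ff _) ff_partner oppr_lt0.
apply: sumr_le0 => g /andP[Hg _]; move: (Hn g); rewrite Hg /= /fpos.
by rewrite -leNgt /ff.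
Qed.

Definition fnext h := odflt h [pick g | (eps g == eps (partner h)) && fpos g].

Lemma fnext_spec h : fpos h -> fpos (fnext h) /\ eps (fnext h) = eps (partner h).
Proof.
move=> Hp; rewrite /fnext; case: pickP => [g /andP[/eqP -> Hg]|Hn] //=.
by have [g Hg] := ex_next Hp; rewrite Hn in Hg.
Qed.

Lemma fpos_partner h : fpos h -> ~~ fpos (partner h).
Proof. by rewrite /fpos ff_partner oppr_gt0 => /lt_gtF ->. Qed.

Lemma forest_zero e : z e = 0.
Proof.
apply/eqP/negP => /negP Hne.
have HeT := Hz Hne.
case: HT => HTE HTc.
have He : e \in E by apply: (subsetP HTE).
have [h0 Hh0] : exists h0, fpos h0.
  have : (0 < #|e|)%N by rewrite (HG2 He).
  case/card_gt0P => h Hh.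
  have Hb : blk h = e by apply: blk_eq.
  have : ff h != 0 by rewrite /ff Hb mulf_neq0 // sgn_neq0.
  move=> Hnz; case: (ltrgt0P (ff h)) => [Hp|Hn|Heq]; first by exists h.
    by exists (partner h); rewrite /fpos ff_partner oppr_gt0.
  by rewrite Heq eqxx in Hnz.
have Hit : forall i, fpos (iter i fnext h0).
  by elim=> [|i IH] //; rewrite iterS; case: (fnext_spec IH).
pose f (i : 'I_#|H|.+1) := iter i fnext h0.
have : ~~ injectiveb f.
  apply/negP => /injectiveP Hf; have := leq_card f Hf.
  by rewrite card_ord ltnn.
case/injectivePn => i [j Hij Hfij].
have [i0 [d [Hd0 Hd]]] : exists i0 d, (0 < d)%N /\ iter d fnext (iter i0 fnext h0) = iter i0 fnext h0.
  case: (ltngtP i j) => Hlt; last by move/val_inj: Hlt => Hlt; rewrite Hlt eqxx in Hij.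
  - exists i, (j - i)%N; split; first by rewrite subn_gt0.
    by rewrite -iterD subnK 1?ltnW // -/(f j) -Hfij.
  - exists j, (i - j)%N; split; first by rewrite subn_gt0.
    by rewrite -iterD subnK 1?ltnW // -/(f i) Hfij.
set y := iter i0 fnext h0 in Hd.
have Hy : fpos y by apply: Hit.
have Hex : exists n, (0 < n)%N && (iter n fnext y == y) by exists d; rewrite Hd0 Hd eqxx.
case: (ex_minnP Hex) => m /andP[Hm0 /eqP Hm] Hmin.
set c := traject fnext y m.
have Hcpos : forall x, x \in c -> fpos x.
  move=> x /trajectP [a _ ->]; rewrite -iterD; exact: Hit.
have Hcu : uniq c.
  apply/negPn/negP => /(uniqPn y) [a [b [Hab Hb Hnab]]].
  rewrite size_traject in Hb.
  move: Hnab; rewrite /c (nth_traject _ (ltn_trans Hab Hb)) (nth_traject _ Hb) => Hnab.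
  have Hlt : (0 < a + (m - b))%N by rewrite addn_gt0 subn_gt0 Hb orbT.
  have := Hmin (a + (m - b))%N; rewrite Hlt /=.
  have -> : iter (a + (m - b)) fnext y = y.
    by rewrite addnC iterD Hnab -iterD (subnK (ltnW Hb)) Hm.
  rewrite eqxx => /(_ isT); apply/negP; rewrite -ltnNge.
  lia.
case: m Hm0 Hm Hmin @c Hcpos Hcu => // m' _ Hm Hmin c Hcpos Hcu.
have Hrot : map fnext c = rot 1 c.
  have Hy' : iter m' fnext (fnext y) = y by rewrite -iterSr.
  rewrite /c map_traj [in RHS]/= rot1_cons -[X in rcons _ X]Hy'.
  by rewrite -trajectSr.
pose W := [seq (partner x, fnext x) | x <- c].
have HWc : oriented_circuit E eps W.
  apply/andP; split; [apply/andP; split|].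
  - by rewrite /W /c.
  - apply/andP; split.
      apply/allP => q /mapP [x Hx ->]; rewrite /dsingle_transition /=.
      case: (fnext_spec (Hcpos x Hx)) => Hp Heps; rewrite Heps eqxx andbT.
      by apply/eqP => Heq; move: (fpos_partner (Hcpos x Hx)); rewrite Heq Hp.
    rewrite /W cycle_map.
    apply: (sub_cycle (e := frel fnext)).
      by move=> x x' /eqP <- /=; rewrite -blk_partner blk_mem.
    rewrite /c /= -[X in rcons _ X]Hm iterSr -trajectSr.
    exact: fpath_traject.
  - rewrite /W -map_comp.
    apply: (uniq_flat2 (a := partner) (b := fnext)).
    + by rewrite (map_inj_uniq (can_inj partnerK)).
    + by rewrite Hrot rot_uniq.
    + move=> x x' Hx Hx'; apply/eqP => Heq.
      move: (fpos_partner (Hcpos x Hx)); rewrite Heq.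
      by case: (fnext_spec (Hcpos x' Hx')) => -> _.
have [e' He' /andP[Hu He'T]] := HTc W HWc.
case/hasP: Hu => q /mapP [x Hx ->] /= Hxe.
have Hb : blk (fnext x) = e' by apply: blk_eq.
case: (fnext_spec (Hcpos x Hx)) => Hp _.
have : z (blk (fnext x)) != 0.
  by apply/eqP => H0; move: Hp; rewrite /fpos /ff H0 mulr0 ltxx.
by move/Hz; rewrite Hb (negbTE He'T).
Qed.

End Forest.

End G.

Section Main.
Variables (V H : finType) (E : {set {set H}}) (eps : H -> V) (tl : {set H})
  (T : {set {set H}}) (B : {set H} -> seq (H * H)) (o : {set {set H}} -> {set H}).
Hypothesis HG : is_graph E.
Hypothesis Htl : directed_version E tl.
Hypothesis HT : forest E eps T.
Hypothesis HB : strictly_fundamental_basis E eps T B.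
Hypothesis Ho : transitional_orientation eps o.
Variable Tr : {set {set {set H}}}.
Hypothesis HTr : Defs.transversal eps Tr.
Variables (k : nat) (f : 'I_k -> {set H}) (g : 'I_k -> {set {set H}}).
Hypotheses (Hfi : injective f) (Hgi : injective g) (Hf : forall i, f i \in E :\: T)
  (Hg : forall j, g j \in Tr).

Lemma HTE : T \subset E. Proof. by case: HT. Qed.

Lemma HfE i : f i \in E. Proof. by have := Hf i; rewrite inE => /andP[]. Qed.
Lemma HfT i : f i \notin T. Proof. by have := Hf i; rewrite inE => /andP[]. Qed.

Lemma Hgtr j : g j \in transitions eps.
Proof. by move: HTr; rewrite /Defs.transversal => -[HS _]; apply: (subsetP HS); apply: Hg. Qed.

Lemma ex_vtx : exists vtx : 'I_k -> V, forall j, transition_at eps (vtx j) (g j).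
Proof.
have : forall j, exists v, transition_at eps v (g j).
  by move=> j; have := Hgtr j; rewrite inE => /existsP [v Hv]; exists v.
by case/fin_all_exists => vtx Hv; exists vtx.
Qed.

Lemma mainL : pm1 (\det (\matrix_(i, j) CM_Delta E tl B o (f i) (g j))).
Proof.
have [vtx Hvtx] := ex_vtx.
have Hoj : forall j h, h \in o (g j) -> eps h = vtx j.
  move=> j h Hh; have Ht := Ho (Hgtr j).
  case/andP: (Hvtx j) => /and3P [/eqP Hcov _ _] _.
  have : h \in cover (g j) by apply/bigcupP; exists (o (g j)).
  by rewrite Hcov inE => /eqP.
have Hvi : injective vtx.
  move=> j j' Hjj; apply: Hgi.
  move: HTr; rewrite /Defs.transversal => -[_ /(_ (vtx j)) /eqP /cards1P [t Ht]].
  have H1 : g j \in [set t0 in Tr | transition_at eps (vtx j) t0] by rewrite inE Hg Hvtx.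
  have H2 : g j' \in [set t0 in Tr | transition_at eps (vtx j) t0] by rewrite inE Hg Hjj Hvtx.
  by move: H1 H2; rewrite Ht !inE => /eqP -> /eqP ->.
pose inS h := [exists j, h \in o (g j)].
pose pi h : V * bool := (eps h, inS h).
pose A (p : V * bool) (x : {set H} + 'I_k) : rat :=
  match x with
  | inl e => \sum_(h in e | pi h == p) sgn tl h
  | inr j => if p == (vtx j, true) then -1 else if p == (vtx j, false) then 1 else 0
  end.
pose good (x : {set H} + 'I_k) := match x with inl e => e \in E | inr _ => true end.
pose m := #|T|.
pose phi (b : 'I_(k + m)) : {set H} + 'I_k :=
  match split b with inl j => inr j | inr l => inl (enum_val l) end.
pose n (j : 'I_k) : {set H} + 'I_k := inl (f j).
pose w (i : 'I_k) (x : {set H} + 'I_k) : rat :=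
  match x with
  | inl e => if e \in E then (sigma tl (B (f i)) e)%:~R else 0
  | inr b => CM_Delta E tl B o (f i) (g b)
  end.
pose s (i : 'I_k) : rat := (sigma tl (B (f i)) (f i))%:~R.
have Hmat : \matrix_(i, j) CM_Delta E tl B o (f i) (g j) = \matrix_(i, b) w i (phi (lshift m b)).
  apply/matrixP => i b; rewrite !mxE /phi.
  by have -> : split (lshift m b) = inl b := unsplitK (inl b).
rewrite Hmat.
have Hsplitl : forall b : 'I_k, split (lshift m b) = inl b by move=> b; exact: (unsplitK (inl b)).
have Hsplitr : forall l : 'I_m, split (rshift k l) = inr l by move=> l; exact: (unsplitK (inr l)).
have Hphil : forall b, phi (lshift m b) = inr b by move=> b; rewrite /phi Hsplitl.
have Hphir : forall l, phi (rshift k l) = inl (enum_val l) by move=> l; rewrite /phi Hsplitr.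
have HinS : forall h, inS h -> exists j', h \in o (g j') by move=> h /existsP.
apply: (@network_det _ _ A good _ k m phi n w s).
-
  move=> [e|j] /= He.
  + have [h [h' [[Hee Hne Ht] Ht']]] := edge2 HG Htl He.
    have HA : forall p, \sum_(h0 in e | pi h0 == p) sgn tl h0 = (pi h == p)%:R - (pi h' == p)%:R.
      move=> p; rewrite Hee big_mkcondr /= big_setU1 /=; last by rewrite inE.
      rewrite big_set1 /sgn Ht (negbTE Ht').
      by case: (pi h == p); case: (pi h' == p).
    have H1 : forall p, A p (inl e) = 1 -> p = pi h.
      move=> p; rewrite /= HA; case: (eqVneq (pi h) p) => [->//|_].
      by case: (pi h' == p).
    have H2 : forall p, A p (inl e) = -1 -> p = pi h'.
      move=> p; rewrite /= HA; case: (eqVneq (pi h') p) => [->//|_].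
      by case: (pi h == p).
    split; [|split].
    * by move=> p; rewrite HA; case: (pi h == p); case: (pi h' == p).
    * by move=> p p' /H1 -> /H1 ->.
    * by move=> p p' /H2 -> /H2 ->.
  + have H1 : forall p, A p (inr j) = 1 -> p = (vtx j, false).
      move=> p /=; case: ifP => _; first by move/eqP.
      by case: ifP => [/eqP ->|_] // /eqP.
    have H2 : forall p, A p (inr j) = -1 -> p = (vtx j, true).
      move=> p /=; case: ifP => [/eqP ->|_] //.
      by case: ifP => _ /eqP.
    split; [|split].
    * by move=> p /=; case: ifP => _; [|case: ifP => _].
    * by move=> p p' /H1 -> /H1 ->.
    * by move=> p p' /H2 -> /H2 ->.
-
  move=> b b'; rewrite /phi.
  case Hb: (split b) => [j|l]; case Hb': (split b') => [j'|l'] // [Heq].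
  + by rewrite -(splitK b) -(splitK b') Hb Hb' Heq.
  + by rewrite -(splitK b) -(splitK b') Hb Hb' (enum_val_inj Heq).
-
  move=> b; rewrite /phi; case: (split b) => [j|l] //=.
  exact: (subsetP HTE _ (enum_valP l)).
-
  by move=> j; exact: HfE.
-
  move=> j b; rewrite /phi /n; case: (split b) => [j'|l] //.
  apply/eqP => -[Heq]; by move: (HfT j); rewrite -Heq enum_valP.
-
  move=> j p.
  have HW : closed_walk E eps (B (f j)).
    by case: (HB (Hf j)) => /andP[/andP[_ ?] _].
  rewrite big_sumType /=.
  have Hl : \sum_(e : {set H}) A p (inl e) * w j (inl e) = Phi (B (f j)) (fun h => pi h == p).
    rewrite -(GL HG Htl HW (fun h => pi h == p)) [RHS]big_mkcond /=; apply: eq_bigr => e _.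
    by rewrite /w /=; case: ifP => _; rewrite ?mulr0.
  have HPhiO : forall b, CM_Delta E tl B o (f j) (g b) = Phi (B (f j)) (fun h => h \in o (g b)).
    move=> b; rewrite /CM_Delta -(GL HG Htl HW); apply: eq_bigr => e He.
    by rewrite (Delta_sum HG Htl _ _ He) mulrC /CM.
  rewrite Hl; under eq_bigr do rewrite /w HPhiO.
  have HinO : forall j' h, h \in o (g j') -> inS h by move=> j' h Hh; apply/existsP; exists j'.
  clear Hl; case: p => v bb.
  case: (pickP (fun j0 => vtx j0 == v)) => [j0 /eqP Hj0|Hnone].
  + subst v.
    have Hpt : forall h, (eps h == vtx j0) && inS h = (h \in o (g j0)).
      move=> h; apply/andP/idP => [[/eqP He /HinS [j' Hj']]|Hh].
        by have := Hoj _ _ Hj'; rewrite He => /Hvi Hjj; rewrite Hjj.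
      by rewrite (Hoj _ _ Hh) eqxx (HinO _ _ Hh).
    rewrite (bigD1 j0) //= big1 ?addr0; last first.
      move=> b Hb; rewrite !xpair_eqE (inj_eq Hvi) (eq_sym j0 b) (negbTE Hb) /=.
      by rewrite mul0r.
    case: bb.
    * rewrite xpair_eqE !eqxx /= mulN1r.
      have -> : Phi (B (f j)) (fun h => pi h == (vtx j0, true)) = Phi (B (f j)) (fun h => h \in o (g j0)).
        by apply: Phi_ext => q _; rewrite /pi !xpair_eqE !eqb_id !Hpt.
      by rewrite subrr.
    * rewrite !xpair_eqE !eqxx /= mul1r.
      have -> : Phi (B (f j)) (fun h => pi h == (vtx j0, false)) =
                Phi (B (f j)) (fun h => (eps h == vtx j0) && ~~ (h \in o (g j0))).
        apply: Phi_ext => q _; rewrite /pi !xpair_eqE !eqbF_neg -!Hpt.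
        by case: (eps q.1 == vtx j0); case: (eps q.2 == vtx j0); case: (inS q.1); case: (inS q.2).
      rewrite PhiB (Phi_at HW) sub0r.
      have -> : Phi (B (f j)) (fun h => (eps h == vtx j0) && (h \in o (g j0))) = Phi (B (f j)) (fun h => h \in o (g j0)).
        by apply: Phi_ext => q _; split; apply/andP/idP => [[]|Hx] //; split => //; rewrite (Hoj _ _ Hx).
      by rewrite addNr.
  + rewrite big1 ?addr0; last first.
      move=> b _; rewrite !xpair_eqE eq_sym (Hnone b) /=; by rewrite mul0r.
    have Hv : forall h, eps h == v -> inS h = false.
      move=> h /eqP Hh; apply/negbTE/negP => /existsP [j' Hj'].
      by have := Hnone j'; rewrite -Hh (Hoj _ _ Hj') eqxx.
    case: bb.
    * rewrite /Phi big1 // => q _.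
      rewrite /pi !xpair_eqE !eqb_id.
      have Hv' : forall h, (eps h == v) && inS h = false.
        by move=> h; case: (eqVneq (eps h) v) => [/eqP Hh|Hh] //=; rewrite Hv.
      by rewrite !Hv' subrr.
    * rewrite -(Phi_at HW v); apply: Phi_ext => q _; rewrite /pi !xpair_eqE !eqbF_neg /=.
      split.
        by case: (eqVneq (eps q.1) v) => [/eqP H1|H1]; rewrite ?H1 ?(Hv _ H1) //= (negbTE H1).
      by case: (eqVneq (eps q.2) v) => [/eqP H2|H2]; rewrite ?H2 ?(Hv _ H2) //= (negbTE H2).
-
  move=> j [e|b]; rewrite /w /=.
  + case: ifP => He; last by rewrite eqxx.
    move=> Hs0.
    have Hu : uses (B (f j)) e.
      by apply: contraNT Hs0 => Hnu; rewrite (sigma_nouse _ Hnu).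
    case: (HB (Hf j)) => _ _ /(_ e He Hu) /orP[HeT|/eqP ->]; last by left.
    right; exists (rshift k (enum_rank_in HeT e)).
    by rewrite Hphir enum_rankK_in.
  + by move=> _; right; exists (lshift m b); exact: Hphil.
-
  by move=> j; rewrite /w /n /= HfE.
-
  move=> j; case: (HB (Hf j)) => Hoc Hu _.
  exact: (sigma_circ HG Htl Hoc (HfE j) Hu).
-
  move=> z Hz Hcz b.
  have HzT : forall e, z (inl e) != 0 -> e \in T.
    move=> e /Hz [b' Hb']; move: Hb'; rewrite /phi; case: (split b') => [l|l] // [<-].
    exact: enum_valP.
  have Hzz : forall e, z (inl e) = 0.
    apply: (forest_zero HG Htl HT HzT) => v.
    have := f_equal2 +%R (Hcz (v, true)) (Hcz (v, false)).
    rewrite addr0 -big_split /= big_sumType /=.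
    rewrite [X in _ + X]big1 ?addr0; last first.
      move=> b' _; rewrite !xpair_eqE /=.
      by case: (v == vtx b') => /=; rewrite ?mul0r ?addr0 ?mulN1r ?mul1r ?addNr.
    move=> Hsum.
    rewrite -(sum_part HG (fun h => eps h == v) (fun h e => sgn tl h * z (inl e))).
    apply: (etrans _ Hsum).
    rewrite [RHS](bigID (fun e => e \in E)) /= [X in _ = _ + X]big1 ?addr0; last first.
      move=> e HeE; have -> : z (inl e) = 0.
        apply/eqP; apply: contraNT HeE => /HzT HeT; exact: (subsetP HTE).
      by rewrite !mulr0 addr0.
    apply: eq_bigr => e _; rewrite -mulrDl -mulr_suml; congr (_ * _).
    rewrite !big_mkcondr -big_split /=; apply: eq_bigr => h _.
    rewrite /pi !xpair_eqE /=.
    by case: (eps h == v); case: (inS h); rewrite /= ?addr0 ?add0r.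
  rewrite /phi; case Hsb: (split b) => [j|l]; last exact: Hzz.
  have := Hcz (vtx j, true); rewrite big_sumType /= big1 ?add0r; last first.
    by move=> e _; rewrite Hzz mulr0.
  rewrite (bigD1 j) //= big1 ?addr0; last first.
    move=> b' Hb'; rewrite !xpair_eqE (inj_eq Hvi) (eq_sym j b') (negbTE Hb') /=.
    by rewrite mul0r.
  by rewrite !eqxx /= mulN1r => /eqP; rewrite oppr_eq0 => /eqP.
Qed.

End Main.

Theorem mainTheorem13 (V H : finType) (E : {set {set H}}) (eps : H -> V)
  (tl : {set H}) (T : {set {set H}}) (B : {set H} -> seq (H * H))
  (o : {set {set H}} -> {set H}) :
  is_graph E ->
  four_regular eps ->
  directed_version E tl ->
  maximal_forest E eps T ->
  strictly_fundamental_basis E eps T B ->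
  transitional_orientation eps o ->
  totally_transversally_unimodular eps (E :\: T) (CM_Delta E tl B o).
Proof.
move=> HG _ Htl [HT _] HB Ho Tr HTr k f g Hfi Hgi Hf Hg.
suff : pm1 (\det (\matrix_(i, j) CM_Delta E tl B o (f i) (g j))).
  by rewrite /pm1 !in_cons in_nil orbF orbA.
by apply: mainL; eassumption.
Qed.
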